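(* In the setting below, assume moreover $\alpha_3\neq0$. The map $(\rho,t)\mapsto(t,g(\rho,t))$ (projection of the multivalued solution $N$ to the $(t,x)$-plane) is singular exactly at the points where $\partial g/\partial\rho=0$, and these are precisely the points with $$t=\frac{\pm A(\rho)(\rho+\alpha_3)^2-\alpha_1\alpha_3+\alpha_0}{\alpha_3\alpha_2}.$$ At such a point (with the same choice of sign), $$x=g(\rho,t)=-\frac{G(\rho)}{\alpha_2}+\frac{\rho(\rho+2\alpha_3)(\rho+\alpha_3)^2A(\rho)^2-\alpha_3^2\alpha_1^2+\alpha_0^2\pm2\alpha_0(\rho+\alpha_3)^2A(\rho)}{2\alpha_3^2\alpha_2}.$$ Thus the caustic is the union of the two curves parametrized by $\rho$ given by these formulas.
   Context: Setting: $p\colon(0,\infty)\to\mathbb{R}$ smooth with $p'>0$, $A(\rho)=\rho^{-1}\sqrt{p'(\rho)}$; constants $\alpha_0,\alpha_1,\alpha_2,\alpha_3$ with $\alpha_2\neq0$; $G$ an antiderivative of $A(\rho)^2(\rho+\alpha_3)$ on an interval $I\subset(0,\infty)$ not containing $-\alpha_3$; $$g(\rho,t)=-\frac{G(\rho)}{\alpha_2}+\frac{\alpha_2^2t^2\rho(\rho+2\alpha_3)+2t\alpha_2\bigl(\alpha_3(\alpha_0+2\alpha_1\rho)+\alpha_1\rho^2\bigr)-(\alpha_0-\alpha_1\alpha_3)^2}{2\alpha_2(\rho+\alpha_3)^2},$$ $U(\rho,t)=\frac{\alpha_2\rho t+\alpha_1\rho+\alpha_0}{\rho+\alpha_3}$.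 The surface $N=\{(t,g(\rho,t),U(\rho,t),\rho)\}$ in the space with coordinates $(t,x,u,\rho)$ is a multivalued solution of the one-dimensional Euler system $\rho_t+(\rho u)_x=0$, $u_t+uu_x+\frac{p'(\rho)}{\rho}\rho_x=0$. The caustic is the set of points where the projection of $N$ to the $(t,x)$-plane is singular. *)

(* Defs.v *)
From Stdlib Require Import Reals Lra.
From Coquelicot Require Import Coquelicot.
Open Scope R_scope.

Definition Afun (p : R -> R) (rho : R) : R := / rho * sqrt (Derive p rho).

Definition gfun (G : R -> R) (a0 a1 a2 a3 : R) (rho t : R) : R :=
  - G rho / a2
  + (a2 ^ 2 * t ^ 2 * rho * (rho + 2 * a3)
     + 2 * t * a2 * (a3 * (a0 + 2 * a1 * rho) + a1 * rho ^ 2)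
     - (a0 - a1 * a3) ^ 2)
    / (2 * a2 * (rho + a3) ^ 2).

Definition Ufun (a0 a1 a2 a3 : R) (rho t : R) : R :=
  (a2 * rho * t + a1 * rho + a0) / (rho + a3).

Definition singular_at (F1 F2 : R -> R -> R) (rho t : R) : Prop :=
  Derive (fun r => F1 r t) rho * Derive (fun s => F2 rho s) t
  - Derive (fun s => F1 rho s) t * Derive (fun r => F2 r t) rho = 0.

Definition is_open_interval (I : R -> Prop) : Prop :=
  (forall x y z, I x -> I z -> x <= y <= z -> I y) /\
  (forall r, I r -> exists eps, 0 < eps /\ forall s, Rabs (s - r) < eps -> I s).

(* Main.v *)
Require Import Defs.
From Stdlib Require Import Reals Lra.
From Coquelicot Require Import Coquelicot.
Open Scope R_scope.

Lemma dg (G : R -> R) a0 a1 a2 a3 rho t d : a2 <> 0 -> rho + a3 <> 0 -> is_derive G rho d ->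
  is_derive (fun r => gfun G a0 a1 a2 a3 r t) rho
   (((a3*a2*t + a1*a3 - a0)^2 - d*(rho+a3)^3)/(a2*(rho+a3)^3)).
Proof.
intros h2 h3 hd. unfold gfun.
auto_derive.
- split; [exists d; exact hd|]. split; auto. rewrite !Rmult_1_r.
  apply Rmult_integral_contrapositive_currified; [lra|].
  apply Rmult_integral_contrapositive_currified; auto.
- replace (Derive (fun x => G x) rho) with d. field. split; auto.
  symmetry; apply is_derive_unique; exact hd.
Qed.
Theorem mainTheorem4
  (p : R -> R) (a0 a1 a2 a3 : R) (I : R -> Prop) (G : R -> R)
  (p_smooth : forall n r, 0 < r -> ex_derive_n p n r)
  (p_incr : forall r, 0 < r -> 0 < Derive p r)
  (ha2 : a2 <> 0) (ha3 : a3 <> 0)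
  (hI : is_open_interval I)
  (hIpos : forall r, I r -> 0 < r)
  (hIa3 : forall r, I r -> r <> - a3)
  (hG : forall r, I r -> is_derive G r ((Afun p r) ^ 2 * (r + a3))) :
  forall rho t, I rho ->
    (singular_at (fun r s => s) (gfun G a0 a1 a2 a3) rho t
       <-> Derive (fun r => gfun G a0 a1 a2 a3 r t) rho = 0) /\
    (Derive (fun r => gfun G a0 a1 a2 a3 r t) rho = 0
       <-> exists sg : R, (sg = 1 \/ sg = -1) /\
           t = (sg * Afun p rho * (rho + a3) ^ 2 - a1 * a3 + a0) / (a3 * a2)) /\
    (forall sg : R, (sg = 1 \/ sg = -1) ->
       t = (sg * Afun p rho * (rho + a3) ^ 2 - a1 * a3 + a0) / (a3 * a2) ->
       gfun G a0 a1 a2 a3 rho t =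
         - G rho / a2
         + (rho * (rho + 2 * a3) * (rho + a3) ^ 2 * (Afun p rho) ^ 2
            - a3 ^ 2 * a1 ^ 2 + a0 ^ 2
            + sg * 2 * a0 * (rho + a3) ^ 2 * Afun p rho)
           / (2 * a3 ^ 2 * a2)).
Proof.
intros rho t hr.
assert (hs : rho + a3 <> 0) by (intro H; apply (hIa3 _ hr); lra).
set (A := Afun p rho).
assert (hD : Derive (fun r => gfun G a0 a1 a2 a3 r t) rho =
   ((a3*a2*t + a1*a3 - a0)^2 - (A^2*(rho+a3))*(rho+a3)^3)/(a2*(rho+a3)^3)).
{ apply is_derive_unique, dg; auto. }
rewrite hD.
assert (hs3 : a2 * (rho+a3)^3 <> 0) by (apply Rmult_integral_contrapositive_currified; auto; apply pow_nonzero; auto).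
split; [|split].
- unfold singular_at. rewrite hD, Derive_const, Derive_id. split; intro H; lra.
- split.
  + intro H.
    assert (HK : (a3*a2*t + a1*a3 - a0 - A*(rho+a3)^2) * (a3*a2*t + a1*a3 - a0 + A*(rho+a3)^2) = 0).
    { apply (Rmult_eq_reg_r (/ (a2*(rho+a3)^3))). 2: apply Rinv_neq_0_compat; auto.
      rewrite Rmult_0_l. rewrite <- H. field. split; auto. }
    destruct (Rmult_integral _ _ HK) as [H1|H1].
    * exists 1. split; [left; reflexivity|]. field_simplify_eq; [|split; auto]. nra.
    * exists (-1). split; [right; reflexivity|]. field_simplify_eq; [|split; auto]. nra.
  + intros [sg [hsg ht]]. subst t.
    destruct hsg; subst sg; field; auto.
- intros sg hsg ht. subst t. unfold gfun.
  destruct hsg; subst sg; field; auto.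
Qed.
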